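(* Let $N\ge2$ and let $Y$ be a real symmetric $N\times N$ matrix. If $\|Y-I\|_F^2\le1$, then $Y$ is scaled diagonally dominant. If $\|Y-I\|_F^2\le\frac{2}{N+1}$, then $Y$ is diagonally dominant.
   Context: A symmetric matrix $X$ is diagonally dominant if $X(i,i)\ge\sum_{j\ne i}|X(i,j)|$ for all $i$; it is scaled diagonally dominant if $X=DYD$ for some positive diagonal matrix $D$ and some diagonally dominant $Y$. *)

(* Defs.v *)
From mathcomp Require Import all_boot all_order all_algebra.
From mathcomp Require Import reals.
Set Implicit Arguments. Unset Strict Implicit. Unset Printing Implicit Defensive.
Import Order.TTheory GRing.Theory Num.Theory.
Local Open Scope ring_scope.

Definition symmetric_mx (R : ringType) (n : nat) (X : 'M[R]_n) : Prop := X^T = X.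

Definition diag_dominant (R : numDomainType) (n : nat) (X : 'M[R]_n) : Prop :=
  forall i : 'I_n, \sum_(j < n | j != i) `|X i j| <= X i i.

(* X = D Y D for some positive diagonal D and diagonally dominant Y
   (Y is then automatically symmetric when X is). *)
Definition scaled_diag_dominant (R : numDomainType) (n : nat) (X : 'M[R]_n) : Prop :=
  exists (d : 'rV[R]_n) (Y : 'M[R]_n),
    (forall i, 0 < d 0 i) /\ diag_dominant Y /\ X = diag_mx d *m Y *m diag_mx d.

Definition frob_sq (R : ringType) (m n : nat) (A : 'M[R]_(m, n)) : R :=
  \sum_(i < m) \sum_(j < n) A i j ^+ 2.

(* Main.v *)
Require Import Defs.
From mathcomp Require Import all_boot all_order all_algebra.
From mathcomp Require Import reals ring lra.
Import Order.TTheory GRing.Theory Num.Theory.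
Local Open Scope ring_scope.

Lemma cs (R : realFieldType) (n : nat) (P : pred 'I_n) (x y : 'I_n -> R) :
  (\sum_(j | P j) x j * y j) ^+ 2 <=
  (\sum_(j | P j) x j ^+ 2) * (\sum_(j | P j) y j ^+ 2).
Proof.
set Sx := \sum_(j | P j) x j ^+ 2; set Sy := \sum_(j | P j) y j ^+ 2.
set Sxy := \sum_(j | P j) x j * y j.
have H0 : 0 <= \sum_(j | P j) \sum_(k | P k) (x j * y k - x k * y j) ^+ 2.
  by apply: sumr_ge0 => j _; apply: sumr_ge0 => k _; apply: sqr_ge0.
have E : \sum_(j | P j) \sum_(k | P k) (x j * y k - x k * y j) ^+ 2 =
  \sum_(j | P j) (x j ^+ 2 * Sy + y j ^+ 2 * Sx - 2 * (x j * y j) * Sxy).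
  apply: eq_bigr => j _.
  rewrite /Sx /Sy /Sxy !mulr_sumr -big_split -sumrB /=.
  by apply: eq_bigr => k _; ring.
rewrite E !big_split /= sumrN -!mulr_suml -mulr_sumr -/Sx -/Sy -/Sxy in H0.
nra.
Qed.

Section Main.
Variable R : realType.
Variable N : nat.
Variable Y : 'M[R]_N.
Hypothesis sym : forall i j, Y j i = Y i j.

Let r2 i := \sum_(j | j != i) Y i j ^+ 2.

Lemma r2_ge0 i : 0 <= r2 i.
Proof. by apply: sumr_ge0 => j _; apply: sqr_ge0. Qed.

Lemma frob_rows : frob_sq (Y - 1%:M) = \sum_i ((Y i i - 1) ^+ 2 + r2 i).
Proof.
rewrite /frob_sq; apply: eq_bigr => i _.
rewrite (bigD1 i) //= !mxE eqxx /r2; congr (_ + _).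
by apply: eq_bigr => j /negbTE ji; rewrite !mxE eq_sym ji subr0.
Qed.

Lemma row_le i : (Y i i - 1) ^+ 2 + r2 i <= frob_sq (Y - 1%:M).
Proof.
rewrite frob_rows (bigD1 i) //= lerDl; apply: sumr_ge0 => k _.
by apply: addr_ge0; [apply: sqr_ge0 | apply: r2_ge0].
Qed.

Lemma row_col i : (Y i i - 1) ^+ 2 + 2 * r2 i <= frob_sq (Y - 1%:M).
Proof.
rewrite frob_rows (bigD1 i) //= mulr2n mulrDl mul1r addrA lerD2l.
rewrite /r2 [X in X <= _]big_seq_cond [X in _ <= X]big_seq_cond.
apply: ler_sum => k /andP[_ ki].
rewrite -[X in X <= _]add0r; apply: lerD; first exact: sqr_ge0.
rewrite (bigD1 i) 1?eq_sym //= sym lerDl.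
by apply: sumr_ge0 => j _; apply: sqr_ge0.
Qed.


Lemma part2 : (2 <= N)%N -> frob_sq (Y - 1%:M) <= 2 / (N%:R + 1) -> diag_dominant Y.
Proof.
move=> N2 hs i.
set s := frob_sq (Y - 1%:M).
set n : R := N%:R.
have n2 : 2 <= n by rewrite /n (ler_nat R 2 N).
have hs' : s * (n + 1) <= 2 by rewrite -ler_pdivlMr //; lra.
have hrc := row_col i; rewrite -/s in hrc.
set rs := \sum_(j | j != i) `|Y i j|.
have rs0 : 0 <= rs by apply: sumr_ge0.
have hcs : rs ^+ 2 <= (n - 1) * r2 i.
  have := @cs _ _ (fun j => j != i) (fun _ => 1) (fun j => `|Y i j|).
  have -> : \sum_(j | j != i) (1:R) ^+ 2 = n - 1.
    have : \sum_(j < N) (1:R) = n by rewrite sumr_const card_ord.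
    rewrite (bigD1 i) //= => <-.
    under eq_bigr do rewrite expr1n.
    by rewrite addrC addrK.
  have -> : \sum_(j | j != i) `|Y i j| ^+ 2 = r2 i.
    by apply: eq_bigr => j _; rewrite real_normK // num_real.
  by under eq_bigr do rewrite mul1r.
rewrite leNgt; apply/negP => H.
set a := Y i i - 1 in hrc.
have Ya : Y i i = 1 + a by rewrite /a; ring.
rewrite Ya in H.
have r20 := r2_ge0 i.
case: (lerP (1 + a) 0) => ha.
  have : 1 <= a ^+ 2 by nra.
  nra.
have h1 : (1 + a) ^+ 2 < rs ^+ 2 by nra.
have h2 : (n - 1) * a ^+ 2 + 2 * (1 + a) ^+ 2 < (n - 1) * s by nra.
have h3 : 0 <= ((n + 1) * a + 2) ^+ 2 by apply: sqr_ge0.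
nra.
Qed.


Lemma r2_zero i j : r2 i = 0 -> j != i -> Y i j = 0.
Proof.
move=> h ji; apply/eqP; rewrite -sqrf_eq0; apply/eqP.
by apply: (psumr_eq0P _ h) => // k _; apply: sqr_ge0.
Qed.

Lemma part1 : frob_sq (Y - 1%:M) <= 1 -> scaled_diag_dominant Y.
Proof.
move=> hs.
set den := fun i => Y i i ^+ 2 + r2 i.
set w := fun i => Num.sqrt (r2 i) / Num.sqrt (den i).
set u := fun i => if r2 i == 0 then 1 else w i.
have den0 i : 0 <= den i by apply: addr_ge0; [apply: sqr_ge0 | apply: r2_ge0].
have w0 i : 0 <= w i by apply: divr_ge0; apply: sqrtr_ge0.
have w2 i : w i ^+ 2 = r2 i / den i.
  by rewrite /w expr_div_n !sqr_sqrtr ?r2_ge0.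
have rowi i : (Y i i - 1) ^+ 2 + r2 i <= 1 by apply: le_trans (row_le i) hs.
have Yii0 i : 0 <= Y i i by have := rowi i; have := r2_ge0 i; nra.
have w2le i : w i ^+ 2 <= (Y i i - 1) ^+ 2 + r2 i.
  rewrite w2; have := den0 i; rewrite le0r => /orP[/eqP ->|dp].
    by rewrite invr0 mulr0; apply: addr_ge0; [apply: sqr_ge0 | apply: r2_ge0].
  rewrite ler_pdivrMr // /den.
  have := sqr_ge0 ((Y i i - 1) ^+ 2 + r2 i + (Y i i - 1)).
  have := r2_ge0 i; nra.
have sumw : \sum_i w i ^+ 2 <= 1.
  apply: le_trans hs; rewrite frob_rows; exact: ler_sum.
have up i : 0 < u i.
  rewrite /u; case: ifP => // /negbT r2n.
  have r2p : 0 < r2 i by rewrite lt0r r2n r2_ge0.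
  apply: divr_gt0; rewrite sqrtr_gt0 //.
  by rewrite /den; have := sqr_ge0 (Y i i); lra.
have key i : \sum_(j | j != i) `|Y i j| * u j <= Y i i * u i.
  rewrite /u; case: ifP => [/eqP r20|/negbT r2n].
    rewrite big1 ?mulr1 // => j ji.
    by rewrite r2_zero // normr0 mul0r.
  have r2p : 0 < r2 i by rewrite lt0r r2n r2_ge0.
  have dp : 0 < den i by rewrite /den; have := sqr_ge0 (Y i i); lra.
  have -> : \sum_(j | j != i) `|Y i j| * (if r2 j == 0 then 1 else w j)
          = \sum_(j | j != i) `|Y i j| * w j.
    apply: eq_bigr => j ji; case: ifP => // /eqP r2j.
    by rewrite -sym r2_zero 1?eq_sym // normr0 !mul0r.
  set L := \sum_(j | j != i) `|Y i j| * w j.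
  have L0 : 0 <= L by apply: sumr_ge0 => j _; apply: mulr_ge0.
  suff : L ^+ 2 <= (Y i i * w i) ^+ 2.
    by rewrite ler_sqr // nnegrE // mulr_ge0.
  apply: le_trans (@cs _ _ (fun j => j != i) (fun j => `|Y i j|) w) _.
  have -> : \sum_(j | j != i) `|Y i j| ^+ 2 = r2 i.
    by apply: eq_bigr => j _; rewrite real_normK // num_real.
  have hs2 : \sum_(j | j != i) w j ^+ 2 <= 1 - w i ^+ 2.
    by move: sumw; rewrite (bigD1 i) //=; lra.
  apply: le_trans (ler_wpM2l (r2_ge0 i) hs2) _.
  rewrite w2 exprMn w2.
  have dn : den i != 0 by rewrite gt_eqF.
  rewrite le_eqVlt; apply/orP; left; apply/eqP.
  move: dn; rewrite /den => dn; field.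
  exact: dn.
exists (\row_i (u i)^-1), (\matrix_(i, j) (Y i j * u i * u j)).
split; first by move=> i; rewrite mxE invr_gt0.
split.
  move=> i; rewrite mxE.
  have -> : \sum_(j | j != i) `|(\matrix_(i0, j0) (Y i0 j0 * u i0 * u j0)) i j|
          = u i * \sum_(j | j != i) `|Y i j| * u j.
    rewrite mulr_sumr; apply: eq_bigr => j _.
    rewrite mxE !normrM (gtr0_norm (up i)) (gtr0_norm (up j)); ring.
  have := ler_wpM2l (ltW (up i)) (key i).
  by rewrite [_ * u i * u i]mulrC mulrA.
apply/matrixP => i j; rewrite mul_mx_diag mul_diag_mx !mxE.
have ui := gt_eqF (up i); have uj := gt_eqF (up j).
by field; rewrite ui uj.
Qed.

End Main.

Theorem lemmaB2 (R : realType) (N : nat) (Y : 'M[R]_N) :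
  (2 <= N)%N -> symmetric_mx Y ->
  (frob_sq (Y - 1%:M) <= 1 -> scaled_diag_dominant Y) /\
  (frob_sq (Y - 1%:M) <= 2 / (N%:R + 1) -> diag_dominant Y).
Proof.
move=> N2 hsym.
have sym : forall i j, Y j i = Y i j.
  by move=> i j; rewrite -[in RHS]hsym mxE.
split; first exact: part1 sym.
exact: part2 sym N2.
Qed.
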